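(* Let $n>1$ and let $(G,\sigma)$ be a vertex-colored graph with $V=V(G)$. Let $G+x$ be obtained by adding a new vertex $x\notin V$ adjacent to all vertices of $V$, and let $\sigma'$ be the coloring of $V\cup\{x\}$ with $\sigma'(v)=\sigma(v)$ for $v\in V$ and $\sigma'(x)\neq\sigma(v)$ for all $v\in V$. Then $(G,\sigma)$ is an $(n-1)$-RBMG if and only if $(G+x,\sigma')$ is an $n$-RBMG.
   Context: All graphs are finite, simple and undirected. A vertex coloring is a surjective map $\sigma:V\to S$; properly colored means adjacent vertices get distinct colors. A phylogenetic tree $T$ on $L$ is a rooted tree with leaf set $L$ whose inner vertices other than the root have degree at least three; $u\preceq_T v$ means $v$ lies on the root-to-$u$ path; $\mathrm{lca}_T$ is last common ancestor. For surjective $\sigma:L\to S$, $y$ is a best match of $x$ if $\sigma(x)\neq\sigma(y)$ and $\mathrm{lca}_T(x,y)\preceq_T\mathrm{lca}_T(x,y')$ for all $y'$ with $\sigma(y')=\sigma(y)$; $G(T,\sigma)$ is the graph on $L$ whose edges are the reciprocal best match pairs. A properly colored $(G,\sigma)$ is an RBMG if $G(T,\sigma)=(G,\sigma)$ for some leaf-colored phylogenetic tree $(T,\sigma)$; it is an $n$-RBMG if moreover exactly $n$ colors are used. *)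

(* Defs.v *)
From HB Require Import structures.
From mathcomp Require Import all_boot.
Set Implicit Arguments. Unset Strict Implicit. Unset Printing Implicit Defensive.

(* A rooted tree is given by a finite vertex type, a root, and a parent map
   (par root = root) along which every vertex reaches the root. *)

Definition children (V : finType) (par : V -> V) (v : V) : {set V} :=
  [set u | (par u == v) && (u != v)].

Record phylo_tree (L : finType) := PhyloTree {
  vert : finType;
  root : vert;
  par : vert -> vert;
  leaf : L -> vert;
  par_root : par root = root;
  reach_root : forall v, exists k, iter k par v = root;
  leaf_inj : injective leaf;
  leaves_exact : forall v, children par v = set0 <-> exists l, leaf l = v;
  inner_deg : forall v, v != root -> children par v != set0 ->
                        2 <= #|children par v|
}.

(* u ⪯_T v : v lies on the path from u to the root *)
Definition anc (L : finType) (T : phylo_tree L) (u v : vert T) : Prop :=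
  exists k, iter k (@par L T) u = v.

Definition is_lca (L : finType) (T : phylo_tree L) (a b z : vert T) : Prop :=
  [/\ anc a z, anc b z & forall w, anc a w -> anc b w -> anc z w].

Definition best_match (L S : finType) (T : phylo_tree L) (sigma : L -> S)
    (x y : L) : Prop :=
  sigma x <> sigma y /\
  forall y', sigma y' = sigma y ->
    forall z z', is_lca (@leaf L T x) (@leaf L T y) z ->
                 is_lca (@leaf L T x) (@leaf L T y') z' -> anc z z'.

Definition properly_colored (L S : finType) (G : rel L) (sigma : L -> S) :=
  forall x y, G x y -> sigma x <> sigma y.

Definition is_RBMG (L S : finType) (G : rel L) (sigma : L -> S) : Prop :=
  properly_colored G sigma /\
  exists T : phylo_tree L,
    forall x y, G x y <-> (best_match T sigma x y /\ best_match T sigma y x).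

Definition is_nRBMG (n : nat) (L S : finType) (G : rel L) (sigma : L -> S) :=
  is_RBMG G sigma /\ #|[set sigma v | v in L]| = n.

(* G + x : the new vertex x is [None], adjacent to every old vertex *)
Definition add_vertex (L : finType) (G : rel L) : rel (option L) :=
  fun a b => match a, b with
             | Some u, Some v => G u v
             | None, Some _ => true
             | Some _, None => true
             | None, None => false
             end.

(* sigma' : old colors kept, x gets the new color None *)
Definition add_color (L S : finType) (sigma : L -> S) : option L -> option S :=
  fun a => match a with Some v => Some (sigma v) | None => None end.

(* Main.v *)
Require Import Defs.
From HB Require Import structures.
From mathcomp Require Import all_boot.
From Stdlib Require Import Classical.
Import Defs.
Set Implicit Arguments. Unset Strict Implicit. Unset Printing Implicit Defensive.


Section Gen.
Variables (V : finType) (r : V) (f : V -> V).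
Hypothesis fr : f r = r.
Hypothesis rr : forall v, exists k, iter k f v = r.

Lemma iter_r k : iter k f r = r.
Proof. by elim: k => //= k ->. Qed.

Lemma cyc m v : 0 < m -> iter m f v = v -> v = r.
Proof.
move=> m0 hv; have [k hk] := rr v.
have e : forall j, iter (j * m) f v = v.
  by elim=> [|j IH] //=; rewrite mulSn iterD IH hv.
have hkm : k <= k * m by rewrite leq_pmulr.
have := e k; rewrite -(subnK hkm) iterD hk iter_r; by move=> <-.
Qed.
End Gen.

Section Tree.
Variables (L : finType) (T : phylo_tree L).
Notation pr := (@par L T).

Lemma anc_refl (u : vert T) : anc u u. Proof. by exists 0. Qed.
Lemma anc_trans (u v w : vert T) : anc u v -> anc v w -> anc u w.
Proof. by move=> [k1 h1] [k2 h2]; exists (k2 + k1); rewrite iterD h1 h2. Qed.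
Lemma anc_root (u : vert T) : anc u (root T).
Proof. exact: reach_root. Qed.
Lemma cycT m (v : vert T) : 0 < m -> iter m pr v = v -> v = root T.
Proof. apply: cyc; [exact: par_root | exact: reach_root]. Qed.
Lemma par_fix (v : vert T) : pr v = v -> v = root T.
Proof. by move=> h; apply: (@cycT 1). Qed.
Lemma par_two (u v : vert T) : pr u = v -> pr v = u -> u = v.
Proof.
move=> h1 h2; have hu : u = root T by apply: (@cycT 2) => //=; rewrite h1 h2.
by rewrite -h1 hu par_root.
Qed.
Lemma anc_antisym (u v : vert T) : anc u v -> anc v u -> u = v.
Proof.
move=> [k h] [m h']; have e : iter (m + k) pr u = u by rewrite iterD h h'.
case: (posnP (m + k)) => [/eqP|pos].
  by rewrite addn_eq0 => /andP [_ /eqP k0]; move: h; rewrite k0.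
have hu := cycT pos e; move: h; rewrite hu (iter_r (par_root T)) => ->; done.
Qed.
Lemma anc_chain (a w1 w2 : vert T) : anc a w1 -> anc a w2 -> anc w1 w2 \/ anc w2 w1.
Proof.
move=> [k1 <-] [k2 <-]; case: (leqP k1 k2) => h.
  by left; exists (k2 - k1); rewrite -iterD subnK.
by right; exists (k1 - k2); rewrite -iterD subnK // ltnW.
Qed.
Lemma lca_unique (a b z1 z2 : vert T) : is_lca a b z1 -> is_lca a b z2 -> z1 = z2.
Proof. by move=> [h1 h2 h3] [g1 g2 g3]; apply: anc_antisym; [apply: h3 | apply: g3]. Qed.
Lemma lca_sym (a b z : vert T) : is_lca a b z -> is_lca b a z.
Proof. by move=> [h1 h2 h3]; split => // w x y; apply: h3. Qed.
Lemma lca_self (a : vert T) : is_lca a a a.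
Proof. by split; [exact: anc_refl|exact: anc_refl|]. Qed.

Lemma min_lca (a b : vert T) k : anc b (iter k pr a) ->
  (forall j, j < k -> ~ anc b (iter j pr a)) -> is_lca a b (iter k pr a).
Proof.
move=> hb hmin; split => //; first by exists k.
move=> w [j hj] hw; rewrite -hj in hw *.
case: (ltnP j k) => hjk; first by case: (hmin _ hjk hw).
by exists (j - k); rewrite -iterD subnK.
Qed.

Lemma lca_exists (a b : vert T) : exists z, is_lca a b z.
Proof.
have [k0 hk0] := reach_root a.
have hb : anc b (iter k0 pr a) by rewrite hk0; apply: anc_root.
suff H : forall n k, k <= n -> anc b (iter k pr a) -> exists z, is_lca a b z.
  exact: (H k0 k0).
elim=> [|n IH] k hk hbk.
  by exists (iter k pr a); apply: min_lca => // j; rewrite ltnNge (leq_trans hk).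
case: (classic (exists j, j < k /\ anc b (iter j pr a))) => [[j [hj hbj]]|hn].
  by apply: (IH j) => //; rewrite -ltnS (leq_trans hj).
by exists (iter k pr a); apply: min_lca => // j hj hbj; apply: hn; exists j.
Qed.

Lemma child_of_root (v : vert T) : v != root T ->
  exists c, [/\ pr c = root T, c != root T & anc v c].
Proof.
have [k hk] := reach_root v.
elim: k v hk => [|k IH] v hk hv; first by move: hv; rewrite -hk eqxx.
move: hk; rewrite iterSr => hk.
case: (eqVneq (pr v) (root T)) => hp; first by exists v; split => //; exact: anc_refl.
have [c [h1 h2 h3]] := IH _ hk hp; exists c; split => //.
by apply: anc_trans h3; exists 1.
Qed.

Lemma in_children (u v : vert T) : (u \in children pr v) = (pr u == v) && (u != v).
Proof. by rewrite inE. Qed.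

End Tree.

Section Transfer.
Variables (LA LB SA SB : finType) (A : phylo_tree LA) (B : phylo_tree LB).
Variables (e : vert A -> vert B) (h : LA -> LB) (sA : LA -> SA) (sB : LB -> SB).
Hypothesis hanc : forall u v, anc u v <-> anc (e u) (e v).
Hypothesis hleaf : forall l, e (leaf A l) = leaf B (h l).
Hypothesis hex : forall a b, exists z, is_lca (leaf B (h a)) (leaf B (h b)) (e z).
Hypothesis hcol : forall a b, sA a = sA b <-> sB (h a) = sB (h b).
Hypothesis hcl : forall a y', sB y' = sB (h a) -> exists b, y' = h b.

Lemma lcaA_of_B a b z : is_lca (leaf B (h a)) (leaf B (h b)) (e z) ->
  is_lca (leaf A a) (leaf A b) z.
Proof.
move=> [h1 h2 h3]; split; try (apply/hanc; rewrite hleaf; done).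
move=> w w1 w2; apply/hanc; apply: h3; rewrite -hleaf; exact/hanc.
Qed.

Lemma lcaB_of_A a b z : is_lca (leaf A a) (leaf A b) z ->
  is_lca (leaf B (h a)) (leaf B (h b)) (e z).
Proof.
move=> hz; have [z0 hz0] := hex a b.
by rewrite (lca_unique hz (lcaA_of_B hz0)).
Qed.

Lemma bm_tr x y : best_match A sA x y <-> best_match B sB (h x) (h y).
Proof.
split.
  move=> [hne hb]; split; first by move=> /hcol.
  move=> y' hy' z z' hz hz'.
  have [b eb] := hcl hy'; subst y'.
  have [z0 hz0] := hex x y; have [z1 hz1] := hex x b.
  rewrite (lca_unique hz hz0) (lca_unique hz' hz1); apply/hanc.
  apply: (hb b) ; [exact/hcol| exact: lcaA_of_B | exact: lcaA_of_B].
move=> [hne hb]; split; first by move=> /hcol.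
move=> y' hy' z z' hz hz'; apply/hanc.
apply: (hb (h y')); [exact/hcol | exact: lcaB_of_A | exact: lcaB_of_A].
Qed.
End Transfer.

Lemma x_bm (LB SB : finType) (B : phylo_tree LB) (sB : LB -> SB) x0
  (hu : forall y, y != x0 -> sB y <> sB x0)
  (hl : forall y, y != x0 -> is_lca (leaf B x0) (leaf B y) (root B)) y :
  y != x0 -> best_match B sB x0 y /\ best_match B sB y x0.
Proof.
move=> hy; split; split.
- by move=> e; apply: (hu _ hy); rewrite e.
- move=> y' hy' z z' hz hz'.
  have hy'x : y' != x0 by apply/eqP => e; apply: (hu _ hy); rewrite -hy' e.
  by rewrite (lca_unique hz (hl _ hy)) (lca_unique hz' (hl _ hy'x)); exact: anc_refl.
- exact: hu.
- move=> y' hy' z z' hz hz'.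
  have ey : y' = x0 by apply/eqP; apply/negPn/negP => hn; exact: (hu _ hn).
  subst y'; by rewrite (lca_unique hz hz'); exact: anc_refl.
Qed.

Section AddLeaf.
Variables (L : finType) (T : phylo_tree L).
Hypothesis hR : children (@par L T) (root T) != set0.

Definition apar (v : option (vert T)) : option (vert T) :=
  match v with None => Some (root T) | Some w => Some (par w) end.
Definition aleaf (l : option L) : option (vert T) :=
  match l with None => None | Some l => Some (leaf T l) end.

Lemma apar_root : apar (Some (root T)) = Some (root T).
Proof. by rewrite /= par_root. Qed.
Lemma iter_apar k w : iter k apar (Some w) = Some (iter k (@par L T) w).
Proof. by elim: k => //= k ->. Qed.
Lemma areach v : exists k, iter k apar v = Some (root T).
Proof.
case: v => [w|]; last by exists 1.
by have [k h] := reach_root w; exists k; rewrite iter_apar h.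
Qed.
Lemma aleaf_inj : injective aleaf.
Proof. by case=> [a|] [b|] //= [] /leaf_inj ->. Qed.

Lemma achildren_leaf w : children (@par L T) w = set0 ->
  children apar (Some w) = set0.
Proof.
move=> h; apply/setP => u; rewrite in_set0 inE; apply/negbTE.
case: u => [u|] /=.
  apply/negP => /andP [/eqP [hp] hu].
  have : u \in children (@par L T) w by rewrite inE hp eqxx.
  by rewrite h inE.
apply/negP => /andP [/eqP [hw] _]; by move: hR; rewrite hw h eqxx.
Qed.

Lemma aleaves v : children apar v = set0 <-> exists l, aleaf l = v.
Proof.
split.
  case: v => [w|] h; last by exists None.
  have : children (@par L T) w = set0.
    apply/setP => u; rewrite in_set0; apply/negbTE/negP => hu.
    have : Some u \in children apar (Some w).
      by move: hu; rewrite !inE /= => /andP [/eqP -> hne]; rewrite eqxx.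
    by rewrite h inE.
  by move/leaves_exact => [l hl]; exists (Some l); rewrite /= hl.
case=> [[l|] <-] /=.
  by apply: achildren_leaf; apply/leaves_exact; exists l.
by apply/setP => u; rewrite !inE; case: u.
Qed.

Lemma adeg v : v != Some (root T) -> children apar v != set0 ->
  2 <= #|children apar v|.
Proof.
case: v => [w|] hw hne.
  have hw' : w != root T by apply: contra hw => /eqP ->.
  have hc : children (@par L T) w != set0.
    by apply: contra hne => /eqP /achildren_leaf ->.
  apply: leq_trans (inner_deg hw' hc) _.
  rewrite -(@card_imset _ _ Some (children (@par L T) w) (@Some_inj _)).
  apply: subset_leq_card.
  apply/subsetP => u /imsetP [u' hu' ->]; move: hu'; rewrite !inE /=.
  by case/andP => /eqP -> hne0; rewrite eqxx (inj_eq (@Some_inj _)) hne0.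
by move: hne; rewrite (_ : children apar None = set0) ?eqxx //; apply/setP => u; rewrite !inE; case: u.
Qed.

Definition addT : phylo_tree (option L) :=
  @PhyloTree _ _ _ _ _ apar_root areach aleaf_inj aleaves adeg.

Lemma addT_anc u v : anc (T := T) u v <-> anc (T := addT) (Some u) (Some v).
Proof.
split; move=> [k hk]; exists k.
  by rewrite /= iter_apar hk.
by move: hk; rewrite /= iter_apar => [[]].
Qed.

Lemma addT_lca_x l : is_lca (T := addT) (leaf addT None) (leaf addT (Some l)) (root addT).
Proof.
split.
- by exists 1.
- by have [k hk] := reach_root (leaf T l); exists k; rewrite /= iter_apar hk.
- move=> w [[|k] hk] [j hj]; move: hk hj => /=.
    by move=> <-; rewrite iter_apar.
  by rewrite -iterS iterSr /= iter_apar (iter_r (par_root T)) => <- _; exists 0.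
Qed.

Lemma addT_ex a b : exists z, is_lca (T := addT) (leaf addT (Some a)) (leaf addT (Some b)) (Some z).
Proof.
have [w hw] := lca_exists (leaf addT (Some a)) (leaf addT (Some b)).
have := hw; case=> [[k hk] _ _]; move: hk; rewrite /= iter_apar => hk.
by exists (iter k (@par L T) (leaf T a)); rewrite hk.
Qed.

End AddLeaf.

Section Star.
Variables (L : finType) (l0 : L).
Definition spar (v : option L) : option L := None.
Lemma spar_root : spar None = None. Proof. by []. Qed.
Lemma sreach v : exists k, iter k spar v = None. Proof. by exists 1. Qed.
Lemma sleaf_inj : injective (@Some L). Proof. exact: Some_inj. Qed.
Lemma sleaves v : children spar v = set0 <-> exists l, Some l = v.
Proof.
case: v => [a|]; split.
- by move=> _; exists a.
- by move=> _; apply/setP => u; rewrite !inE.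
- by move=> /setP /(_ (Some l0)); rewrite !inE.
- by case.
Qed.
Lemma sdeg v : v != None -> children spar v != set0 -> 2 <= #|children spar v|.
Proof.
case: v => [a|] // _; rewrite (_ : children spar (Some a) = set0) ?eqxx //; apply/setP => u; rewrite !inE.
Qed.
Definition starT : phylo_tree L :=
  @PhyloTree _ _ _ _ _ spar_root sreach sleaf_inj sleaves sdeg.

Lemma star_anc (u w : vert starT) : anc u w -> w = u \/ w = None.
Proof. by case=> [[|k] <-]; [left | right]. Qed.
End Star.

Section Remove.
Variables (L : finType) (T : phylo_tree (option L)) (l0 : L) (c0 : vert T).
Notation pr := (@par _ T).
Definition xv := leaf T None.
Definition pp := pr xv.
Definition bb := (pp != root T) && (#|children pr pp| == 2).
Hypothesis hc0 : bb -> [/\ c0 \in children pr pp, c0 != xv &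
   forall w, w \in children pr pp -> w = xv \/ w = c0].

Lemma noch_leaf l : children pr (leaf T l) = set0.
Proof. by apply/leaves_exact; exists l. Qed.

Lemma not_child u v : children pr v = set0 -> pr u = v -> u = v.
Proof.
move=> h hu; apply/eqP/negPn/negP => hne.
have : u \in children pr v by rewrite inE hu eqxx.
by rewrite h inE.
Qed.

Lemma root_ch : children pr (root T) != set0.
Proof.
have hne : leaf T (Some l0) != root T.
  apply/eqP => e.
  have [c [h1 h2 h3]] : exists c, [/\ pr c = root T, c != root T & anc (leaf T None) c].
    apply: child_of_root; apply/eqP => e2.
    by move: (leaf_inj (etrans e2 (esym e))).
  apply/negP: h2; apply/negPn/eqP; rewrite -e.
  by apply: (not_child (noch_leaf (Some l0))); rewrite h1 e.
have [c [h1 h2 h3]] := child_of_root hne.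
by apply/set0Pn; exists c; rewrite inE h1 eqxx h2.
Qed.

Lemma xv_ne_root : xv != root T.
Proof. by apply/eqP => e; move: root_ch; rewrite -e /xv noch_leaf eqxx. Qed.

Lemma pp_ne_xv : pp != xv.
Proof. by apply/eqP => /par_fix e; move: xv_ne_root; rewrite e eqxx. Qed.

Lemma xv_in : xv \in children pr pp.
Proof. by rewrite inE eqxx eq_sym pp_ne_xv. Qed.

Lemma anc_xv u : anc u xv -> u = xv.
Proof.
case=> [[|k]] //; rewrite iterS => h.
have := not_child (noch_leaf None) h; rewrite -/xv => e.
by move: h; rewrite e -/pp => /eqP; rewrite (negbTE pp_ne_xv).
Qed.

Lemma leaf_ne_xv l : leaf T (Some l) != xv.
Proof. by apply/eqP => /leaf_inj. Qed.

Lemma leaf_ne_pp l : leaf T (Some l) != pp.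
Proof. by apply/eqP => e; move: xv_in; rewrite -e noch_leaf inE. Qed.

Lemma pp_ne_par : bb -> pp != pr pp.
Proof. by case/andP => h _; apply: contra h => /eqP e; apply/eqP/par_fix. Qed.

Lemma c0_ne_pp : bb -> c0 != pp.
Proof. by move=> hb; have [+ _ _] := hc0 hb; rewrite inE => /andP []. Qed.

Lemma c0_par : bb -> pr c0 = pp.
Proof. by move=> hb; have [+ _ _] := hc0 hb; rewrite inE => /andP [/eqP]. Qed.

Definition K (w : vert T) : bool := (w != xv) && ~~ (bb && (w == pp)).

Definition rp w := if bb && (pr w == pp) then pr pp else pr w.

Lemma rp_K w : K w -> K (rp w).
Proof.
rewrite /K /rp => /andP [hx hp].
case: ifP => [/andP [hb /eqP e]|hn].
  have h1 : (pr pp == pp) = false by apply/negbTE; rewrite eq_sym; exact: pp_ne_par.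
  rewrite hb h1 andbT.
  apply/eqP => e2; move: (not_child (noch_leaf None) e2); rewrite -/xv => e3.
  by move: pp_ne_xv; rewrite e3 eqxx.
rewrite hn andbT; apply/eqP => e2; move: (not_child (noch_leaf None) e2).
by rewrite -/xv => e3; move: hx; rewrite e3 eqxx.
Qed.

Lemma root_K : K (root T).
Proof.
rewrite /K eq_sym xv_ne_root /=; apply/negP => /andP [/andP [h _] /eqP e].
by move: h; rewrite e eqxx.
Qed.

Lemma leaf_K l : K (leaf T (Some l)).
Proof. by rewrite /K leaf_ne_xv (negbTE (leaf_ne_pp l)) andbF. Qed.

Definition RV := {w : vert T | K w}.
Definition rpar (u : RV) : RV := exist _ (rp (val u)) (rp_K (valP u)).
Definition rroot : RV := exist _ (root T) root_K.
Definition rleaf (l : L) : RV := exist _ (leaf T (Some l)) (leaf_K l).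

Lemma rpar_root : rpar rroot = rroot.
Proof.
apply: val_inj => /=; rewrite /rp par_root.
case: ifP => // /andP [/andP [h _] /eqP e]; by move: h; rewrite e eqxx.
Qed.

Lemma iter_rpar_fw k u : exists m, iter m pr (val u) = val (iter k rpar u).
Proof.
elim: k => [|k [m hm]]; first by exists 0.
rewrite iterS /= /rp; case: ifP => [/andP [_ /eqP e]|_].
  by exists m.+2; rewrite !iterS hm e.
by exists m.+1; rewrite iterS hm.
Qed.

Lemma iter_rpar_bw m u v : iter m pr (val u) = val v -> exists k, iter k rpar u = v.
Proof.
elim: m {-2}m (leqnn m) u => [|n IH] m hm u.
  by move: hm; rewrite leqn0 => /eqP -> /= h; exists 0; apply: val_inj.
case: m hm => [|m] hm.
  by move=> /= h; exists 0; apply: val_inj.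
rewrite iterSr => h.
case hb: (bb && (pr (val u) == pp)).
  move: hb => /andP [hb /eqP e]; move: h; rewrite e.
  case: m hm => [|m] hm /=.
    by clear IH; case: v => w kw /= e2; exfalso; move: kw; rewrite /K -e2 hb eqxx andbF.
  rewrite -iterS iterSr => h.
  have hv : iter m pr (val (rpar u)) = val v by rewrite /= /rp hb e eqxx.
  have [k hk] := IH m (ltnW hm) (rpar u) hv.
  by exists k.+1; rewrite iterSr.
have hv : iter m pr (val (rpar u)) = val v by rewrite /= /rp hb.
have [k hk] := IH m hm (rpar u) hv.
by exists k.+1; rewrite iterSr.
Qed.

Lemma rreach u : exists k, iter k rpar u = rroot.
Proof. by have [m hm] := reach_root (val u); apply: (@iter_rpar_bw m). Qed.

Lemma rleaf_inj : injective rleaf.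
Proof. by move=> a b /(congr1 val) /= /leaf_inj [] . Qed.

Lemma rchild u v : u \in children rpar v ->
  (val u \in children pr (val v)) \/ (bb /\ pr (val u) = pp /\ pp \in children pr (val v)).
Proof.
rewrite inE => /andP [/eqP e hne].
have hne' : val u != val v by apply: contra hne => /eqP /val_inj ->.
move: e => /(congr1 val) /=; rewrite /rp; case: ifP => [/andP [hb /eqP e1] e2|_ e2].
  by right; split => //; split => //; rewrite inE e2 eqxx /= -e2; exact: pp_ne_par.
by left; rewrite inE e2 eqxx hne'.
Qed.

Lemma c0_K : bb -> K c0.
Proof.
move=> hb; have [_ h _] := hc0 hb; rewrite /K h /= hb /=.
exact: c0_ne_pp.
Qed.

Definition rc (hb : bb) : RV := exist _ c0 (c0_K hb).

Lemma c0_child v (hb : bb) : pr pp = val v -> rc hb \in children rpar v.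
Proof.
move=> e; rewrite inE; apply/andP; split.
  apply/eqP/val_inj => /=; rewrite /rp hb c0_par // eqxx /= e //.
apply/eqP => /(congr1 val) /= e2.
have := par_two (c0_par hb) (etrans e (esym e2)).
by move/eqP; rewrite (negbTE (c0_ne_pp hb)).
Qed.

Lemma kept_child u0 v (Ku : K u0) : u0 \in children pr (val v) ->
  exist _ u0 Ku \in children rpar v.
Proof.
rewrite !inE => /andP [/eqP e hne]; apply/andP; split.
  apply/eqP/val_inj => /=; rewrite /rp e.
  case: ifP => // /andP [hb hv]; case: v e hne hv => w kw /= e hne hv.
  by move: kw; rewrite /K hb hv andbF.
by apply: contra hne => /eqP /(congr1 val) /= ->.
Qed.

Lemma rleaves v : children rpar v = set0 <-> exists l, rleaf l = v.
Proof.
split; last first.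
  move=> [l <-]; apply/setP => u; rewrite in_set0; apply/negbTE/negP.
  by move=> /rchild [h | [hb [_ h]]]; move: h; rewrite /= noch_leaf inE.
move=> h.
case: (classic (exists u0, u0 \in children pr (val v) /\ u0 != xv)) => [[u0 [hu0 hx]] | hn].
  exfalso; case hK: (K u0).
    by have := kept_child hK hu0; rewrite h inE.
  move: hK; rewrite /K hx /= => /negbFE /andP [hb /eqP e].
  have e2 : pr pp = val v by move: hu0; rewrite inE e => /andP [/eqP].
  by have := c0_child hb e2; rewrite h inE.
case: (eqVneq (children pr (val v)) set0) => hc.
  have [[l|] hl] := (leaves_exact _).1 hc.
    by exists l; apply: val_inj.
  by exfalso; case: v h hc hn hl => w kw /= _ _ _ e; move: kw; rewrite /K -e eqxx.
exfalso; have [u0 hu0] := set0Pn _ hc.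
have ex : forall w, w \in children pr (val v) -> w = xv.
  by move=> w hw; apply/eqP/negPn/negP => hw'; apply: hn; exists w.
have e : val v = pp by move: (hu0); rewrite (ex _ hu0) inE => /andP [/eqP <-].
case: (eqVneq pp (root T)) => hr.
  have hne : leaf T (Some l0) != root T by rewrite -hr leaf_ne_pp.
  have [c [h1 h2 h3]] := child_of_root hne.
  have : c \in children pr (val v) by rewrite inE e hr h1 eqxx h2.
  move/ex => ec; move: h3; rewrite ec => /anc_xv /eqP.
  by rewrite (negbTE (leaf_ne_xv l0)).
have hpc : children pr pp != set0 by rewrite -e.
have := inner_deg hr hpc.
have : #|children pr (val v)| <= 1.
  rewrite -(cards1 xv); apply: subset_leq_card; apply/subsetP => w /ex ->.
  by rewrite inE.
by rewrite e => h1 h2; move: (leq_trans h2 h1).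
Qed.

Lemma rdeg v : v != rroot -> children rpar v != set0 -> 2 <= #|children rpar v|.
Proof.
move=> hv hne.
have hv' : val v != root T by apply: contra hv => /eqP e; apply/eqP/val_inj.
set C := children pr (val v).
have hC : C != set0.
  have [u hu] := set0Pn _ hne; apply/set0Pn.
  by case: (rchild hu) => [h | [_ [_ h]]]; [exists (val u) | exists pp].
have hdeg := inner_deg hv' hC.
set D := C :\ xv.
have hD : 2 <= #|D|.
  have := cardsD1 xv C; case hx: (xv \in C) => /= hc; last by move: hdeg; rewrite hc.
  have e : val v = pp by move: hx; rewrite inE => /andP [/eqP <-].
  have hb : ~~ bb by case: v hv hv' e {hne C hC hdeg hx hc D} => w kw /= _ _ e; move: kw; rewrite /K e eqxx andbT => /andP [].
  move: hb; rewrite /bb -e hv' /= => hn.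
  have hn2 : #|C| != 2 := hn.
  by move: hdeg hn2; rewrite hc; case: #|D| => [|[|k]].
pose g w := if bb && (w == pp) then c0 else w.
have hsub : g @: D \subset [set val u | u in children rpar v].
  apply/subsetP => w' /imsetP [w hw ->]; move: hw; rewrite in_setD1 => /andP [hwx hwC].
  rewrite /g; case hb: (bb && (w == pp)).
    move: hb => /andP [hb /eqP ew].
    have e2 : pr pp = val v by move: hwC; rewrite inE ew => /andP [/eqP].
    by apply/imsetP; exists (rc hb) => //; apply: c0_child.
  have Kw : K w by rewrite /K hwx hb.
  by apply/imsetP; exists (exist _ w Kw) => //; apply: kept_child.
have hinj : {in D &, injective g}.
  have key : forall w1 w2, w1 \in D -> w2 \in D -> bb -> w1 = pp -> c0 = w2 -> False.
    move=> w1 w2 h1 h2 hb e1 e2.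
    move: h1 h2; rewrite !inE e1 -e2 => /andP [_ /andP [/eqP h1 _]] /andP [_ /andP [/eqP h2 _]].
    by move: (pp_ne_par hb); rewrite h1 -h2 c0_par // eqxx.
  move=> w1 w2 h1 h2; rewrite /g.
  case hb1: (bb && (w1 == pp)); case hb2: (bb && (w2 == pp)).
  - by move: hb1 hb2 => /andP [_ /eqP ->] /andP [_ /eqP ->].
  - by move: hb1 => /andP [hb /eqP e1] e2; case: (key _ _ h1 h2 hb e1 e2).
  - by move: hb2 => /andP [hb /eqP e1] e2; case: (key _ _ h2 h1 hb e1 (esym e2)).
  - by [].
apply: (leq_trans hD); rewrite -(card_in_imset hinj).
apply: (leq_trans (subset_leq_card hsub)).
by rewrite card_imset //; exact: val_inj.
Qed.

Definition remT : phylo_tree L :=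
  @PhyloTree _ _ _ _ _ rpar_root rreach rleaf_inj rleaves rdeg.

Lemma remT_anc (u v : vert remT) : anc u v <-> anc (T:=T) (val u) (val v).
Proof.
split.
  by move=> [k <-]; have [m hm] := iter_rpar_fw k u; exists m.
by move=> [m hm]; apply: (iter_rpar_bw hm).
Qed.

Lemma anc_to_c0 u : bb -> anc u pp -> u != pp -> u != xv -> anc u c0.
Proof.
move=> hb [[|k] h] h1 h2; first by move: h1; rewrite -h eqxx.
move: h; rewrite iterS => h.
have hw : iter k pr u \in children pr pp.
  rewrite inE h eqxx /=; apply/eqP => e; move: (pp_ne_par hb); rewrite -{2}e h eqxx //.
have [_ _ hcc] := hc0 hb.
case: (hcc _ hw) => e.
  by have := anc_xv (ex_intro _ k e) => e2; move: h2; rewrite e2 eqxx.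
by exists k.
Qed.

Lemma remT_ex a b : exists z : vert remT,
  is_lca (T:=T) (leaf T (Some a)) (leaf T (Some b)) (val z).
Proof.
have [w hw] := lca_exists (leaf T (Some a)) (leaf T (Some b)).
suff Kw : K w by exists (exist _ w Kw).
have := hw; case=> h1 h2 h3.
rewrite /K; apply/andP; split.
  by apply/eqP => e; move: h1; rewrite e => /anc_xv /eqP; rewrite (negbTE (leaf_ne_xv a)).
apply/negP => /andP [hb /eqP e]; rewrite e in h1 h2 h3.
have hc1 := anc_to_c0 hb h1 (leaf_ne_pp a) (leaf_ne_xv a).
have hc2 := anc_to_c0 hb h2 (leaf_ne_pp b) (leaf_ne_xv b).
have := anc_antisym (h3 _ hc1 hc2) (ex_intro _ 1 (c0_par hb)).
by move/eqP; rewrite eq_sym (negbTE (c0_ne_pp hb)).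
Qed.

End Remove.

Lemma card_add (L S : finType) (sigma : L -> S) :
  #|[set add_color sigma v | v in (option L : finType)]| = #|[set sigma v | v in L]|.+1.
Proof.
have -> : [set add_color sigma v | v in (option L : finType)] = None |: (Some @: [set sigma v | v in L]).
  apply/setP => [[s|]]; rewrite in_setU1 /=.
    rewrite (mem_imset _ _ (@Some_inj _)).
    apply/imsetP/imsetP => [[[v|] _ e]|[v _ e]] //.
      by exists v => //; case: e.
    by exists (Some v) => //=; rewrite e.
  by apply/imsetP; exists None.
rewrite cardsU1 card_imset; last exact: Some_inj.
suff -> : None \notin Some @: [set sigma v | v in L] by [].
by apply/imsetP => [[x _]].
Qed.

Lemma exists_c0 (L : finType) (T : phylo_tree (option L)) (l0 : L) : exists c0 : vert T,
  bb T -> [/\ c0 \in children (@par _ T) (pp T), c0 != xv T &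
   forall w, w \in children (@par _ T) (pp T) -> w = xv T \/ w = c0].
Proof.
case hb: (bb T); last by exists (xv T).
move: (hb) => /andP [_ /eqP h2].
have := cardsD1 (xv T) (children (@par _ T) (pp T)); rewrite h2 (xv_in T l0) => e.
have : #|children (@par _ T) (pp T) :\ xv T| == 1 by rewrite -(eqn_add2l 1) -e.
case/cards1P => c hc; exists c => _.
have hcin : c \in children (@par _ T) (pp T) :\ xv T by rewrite hc inE.
move: (hcin); rewrite in_setD1 => /andP [h1 h3]; split => // w hw.
case: (eqVneq w (xv T)) => hwx; first by left.
by right; apply/set1P; rewrite -hc in_setD1 hwx.
Qed.

Section Final.
Variables (L S : finType) (G : rel L) (sigma : L -> S).
Hypothesis hsym : symmetric G.

Lemma hcolL a b : sigma a = sigma b <-> add_color sigma (Some a) = add_color sigma (Some b).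
Proof. by split => [e|[e]]; rewrite /= ?e. Qed.
Lemma hclL a (y' : option L) : add_color sigma y' = add_color sigma (Some a) -> exists b, y' = Some b.
Proof. by case: y' => [b|] // _; exists b. Qed.

Lemma fin_rel (B : phylo_tree (option L)) :
  (forall a b, G a b <-> best_match B (add_color sigma) (Some a) (Some b) /\
                         best_match B (add_color sigma) (Some b) (Some a)) ->
  (forall l, is_lca (leaf B None) (leaf B (Some l)) (root B)) ->
  forall x y, add_vertex G x y <-> (best_match B (add_color sigma) x y /\
                                   best_match B (add_color sigma) y x).
Proof.
move=> hi hii.
have hx : forall l, best_match B (add_color sigma) None (Some l) /\
                    best_match B (add_color sigma) (Some l) None.
  move=> l; apply: x_bm => //; first by case.
  by case=> // l' _; apply: hii.
case=> [a|] [b|] /=.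
- exact: hi.
- by split => // _; have [] := hx a.
- by split => // _; have [] := hx b.
- by split => // [[[]]].
Qed.
End Final.

Lemma all_root (L : finType) (T : phylo_tree L) :
  children (@par _ T) (root T) = set0 -> forall v : vert T, v = root T.
Proof.
move=> h v; apply/eqP/negPn/negP => hv.
have [c [h1 h2 _]] := child_of_root hv.
have : c \in children (@par _ T) (root T) by rewrite inE h1 eqxx h2.
by rewrite h inE.
Qed.

Theorem mainTheorem4 (n : nat) (L S : finType) (G : rel L) (sigma : L -> S) :
  1 < n -> symmetric G -> irreflexive G ->
  (forall s : S, exists v : L, sigma v = s) ->
  (is_nRBMG n.-1 G sigma <-> is_nRBMG n (add_vertex G) (add_color sigma)).
Proof.
move=> hn hsym hirr hsurj.
have hcard := card_add sigma.
have getl : 0 < #|[set sigma v | v in L]| -> exists l0 : L, True.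
  by rewrite card_gt0 => /set0Pn [s /imsetP [l _ _]]; exists l.
split.
- move=> [[pc [T hT]] hc].
  have [l0 _] : exists l0 : L, True by apply: getl; rewrite hc -ltnS prednK // ltnW.
  split; last by rewrite hcard hc prednK // ltnW.
  split.
    case=> [a|] [b|] //=.
    by move=> hab [e]; exact: pc hab e.
  case: (eqVneq (children (@par _ T) (root T)) set0) => hR.
    have ar := all_root hR.
    have sing : forall l, l = l0 by move=> l; apply: (@leaf_inj _ T); rewrite (ar (leaf T l)) (ar (leaf T l0)).
    exists (starT (None : option L)); apply: fin_rel.
      move=> a b; rewrite hT.
      have h1 : forall u v : vert T, anc u v <-> anc (T := starT (None : option L)) (Some (Some l0)) (Some (Some l0)).
        by move=> u v; rewrite (ar u) (ar v); split => _; exact: anc_refl.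
      have h2 : forall l, Some (Some l0) = leaf (starT (None : option L)) (Some l).
        by move=> l; rewrite (sing l).
      have h3 : forall a' b' : L, exists z : vert T, is_lca (T := starT (None : option L)) (leaf (starT None) (Some a')) (leaf (starT None) (Some b')) (Some (Some l0)).
        by move=> a' b'; rewrite (sing a') (sing b'); exists (root T); exact: lca_self.
      have tr := fun x y => @bm_tr _ _ _ _ T (starT (None : option L)) (fun _ => Some (Some l0)) Some
          sigma (add_color sigma) h1 h2 h3 (@hcolL _ _ sigma) (@hclL _ _ sigma) x y.
      by rewrite !tr.
    move=> l; split; try by exists 1.
    move=> w h1 h2.
    case: (star_anc h1) => e1; last by rewrite e1; exact: anc_refl.
    by case: (star_anc h2) => e2; [rewrite e1 in e2 | rewrite e2; exact: anc_refl].
  exists (addT hR); apply: fin_rel; last exact: addT_lca_x.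
  move=> a b; rewrite hT.
  have tr := fun x y => @bm_tr _ _ _ _ T (addT hR) Some Some
          sigma (add_color sigma) (@addT_anc _ _ hR) (fun _ => erefl) (@addT_ex _ _ hR)
          (@hcolL _ _ sigma) (@hclL _ _ sigma) x y.
  by rewrite !tr.
- move=> [[pc [T hT]] hc].
  have hc' : #|[set sigma v | v in L]| = n.-1 by rewrite -hc hcard.
  have [l0 _] : exists l0 : L, True by apply: getl; rewrite hc' -ltnS prednK // ltnW.
  split => //; split.
    by move=> a b hab e; apply: (pc (Some a) (Some b) hab); rewrite /= e.
  have [c0 hc0] := exists_c0 T l0.
  exists (remT l0 hc0) => a b.
  have tr := fun x y => @bm_tr _ _ _ _ (remT l0 hc0) T val Some
          sigma (add_color sigma) (@remT_anc _ _ _ _ hc0) (fun _ => erefl) (@remT_ex _ _ l0 _ hc0)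
          (@hcolL _ _ sigma) (@hclL _ _ sigma) x y.
  by rewrite !tr; exact: (hT (Some a) (Some b)).
Qed.
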